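(* Let $\bm{\Theta}\ni\bm{\theta}\mapsto\bm{P}_{\bm{\theta}}$ be any measurable parameterization of probability measures on $\mathbb{X}^\infty$, let $\bm{\pi}$ be a probability measure on $\bm{\Theta}$, and let $\bm{P}(x)=\int\bm{P}_{\bm{\theta}}(x)\,d\bm{\pi}(\bm{\theta})$. Then $\bm{P}_{\bm{\theta}}(\mathcal{B}_{\bm{P}})=1$ for $\bm{\pi}$-almost all $\bm{\theta}\in\bm{\Theta}$.
   Context: $\mathbb{X}$ is a countable alphabet, $\mathbb{Y}=\{0,1,\ldots,D-1\}$, $\log$ is logarithm to base $D$, $x^n$ is the length-$n$ prefix of $\bm{x}\in\mathbb{X}^\infty$, and $\bm{P}(x)$ for a string $x$ is the measure of the set of sequences beginning with $x$. $K$ denotes prefix Kolmogorov complexity for a fixed universal prefix machine with programs over $\mathbb{Y}$. $\mathcal{B}_{\bm{P}}$ (the $\bm{P}$-Barron random sequences) is the set of $\bm{x}\in\mathbb{X}^\infty$ such that $K(x^n)+\log\bm{P}(x^n)>0$ for all but finitely many $n\in\mathbb{N}$. *)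

(* Defs.v *)
From HB Require Import structures.
From mathcomp Require Import all_boot all_order all_algebra.
From mathcomp Require Import all_classical all_reals all_analysis.
Set Implicit Arguments. Unset Strict Implicit. Unset Printing Implicit Defensive.
Import Order.TTheory GRing.Theory Num.Theory.
Local Open Scope classical_set_scope.
Local Open Scope ring_scope.

Inductive prf : Type :=
| PZero
| PSucc
| PProj of nat
| PComp of prf & seq prf
| PRec of prf & prf
| PMin of prf.

Inductive eval : prf -> seq nat -> nat -> Prop :=
| eval_zero v : eval PZero v 0
| eval_succ v : eval PSucc v (head 0%N v).+1
| eval_proj i v : eval (PProj i) v (nth 0%N v i)
| eval_comp f gs v ws r : evals gs v ws -> eval f ws r -> eval (PComp f gs) v r
| eval_rec0 f g v r : eval f v r -> eval (PRec f g) (0%N :: v) r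
| eval_recS f g n v r r' :
    eval (PRec f g) (n :: v) r -> eval g (n :: r :: v) r' ->
    eval (PRec f g) (n.+1 :: v) r'
| eval_min f v n :
    eval f (n :: v) 0 ->
    (forall m, (m < n)%N -> exists k, (0 < k)%N /\ eval f (m :: v) k) ->
    eval (PMin f) v n
with evals : seq prf -> seq nat -> seq nat -> Prop :=
| evals_nil v : evals [::] v [::]
| evals_cons g gs v w ws : eval g v w -> evals gs v ws -> evals (g :: gs) v (w :: ws).

Section Machines.
Variables (X : countType) (D : nat).

Definition machine := seq 'I_D -> option (seq X).

Definition computes (e : prf) (M : machine) : Prop :=
  forall (p : seq 'I_D) (x : seq X), M p = Some x <-> eval e [:: pickle p] (pickle x).

Definition partial_recursive (M : machine) : Prop := exists e, computes e M.

Definition prefix_free (M : machine) : Prop :=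
  forall p q : seq 'I_D, M p <> None -> M q <> None -> prefix p q -> p = q.

Definition prefix_machine (M : machine) : Prop :=
  partial_recursive M /\ prefix_free M.

Definition universal_prefix_machine (U : machine) : Prop :=
  prefix_machine U /\
  forall M : machine, prefix_machine M ->
    exists s : seq 'I_D, forall p, U (s ++ p) = M p.

(* prefix Kolmogorov complexity K_U(x) (+oo if x has no program) *)
Definition KU {R : realType} (U : machine) (x : seq X) : \bar R :=
  ereal_inf [set ((size p)%:R)%:E | p in [set p | U p = Some x]].

End Machines.

Definition seqs (X : Type) (x0 : X) := nat -> X.
HB.instance Definition _ (X : Type) (x0 : X) :=
  gen_eqMixin (seqs x0).
HB.instance Definition _ (X : Type) (x0 : X) :=
  gen_choiceMixin (seqs x0).
HB.instance Definition _ (X : Type) (x0 : X) :=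
  isPointed.Build (seqs x0) (fun _ => x0).

Definition pre (X : Type) (n : nat) (w : nat -> X) : seq X := [seq w i | i <- iota 0 n].

Definition cyl (X : Type) (x0 : X) (x : seq X) : set (seqs x0) :=
  [set w | pre (size x) w = x].

Definition cylinders (X : Type) (x0 : X) : set (set (seqs x0)) := range (@cyl X x0).

Notation Xinf x0 := (g_sigma_algebraType (@cylinders _ x0)).

Definition mixture (R : realType) (X : Type) (x0 : X) (dT : measure_display)
    (Theta : measurableType dT) (k : R.-ker Theta ~> Xinf x0)
    (pi : {measure set Theta -> \bar R}) (x : seq X) : \bar R :=
  (\int[pi]_th k th (@cyl X x0 x))%E.

(* K(x) + log_D P(x) > 0, with log_D 0 = -oo (so P(x) > 0 is required) *)
Definition barron_ok (R : realType) (X : countType) (D : nat)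
    (U : machine X D) (P : seq X -> \bar R) (x : seq X) : Prop :=
  (0 < P x)%E /\ (0 < KU U x + (ln (fine (P x)) / ln (D%:R))%:E)%E.

Definition barron_set (R : realType) (X : countType) (x0 : X) (D : nat)
    (U : machine X D) (P : seq X -> \bar R) : set (Xinf x0) :=
  [set w | exists N, forall n, (N <= n)%N -> barron_ok U P (pre n w)].

(* Main.v *)
Require Import Defs.
From HB Require Import structures.
From mathcomp Require Import all_boot all_order all_algebra.
From mathcomp Require Import all_classical all_reals all_analysis.
From mathcomp Require Import measurable_realfun.
From mathcomp Require Import lra.
Set Implicit Arguments. Unset Strict Implicit. Unset Printing Implicit Defensive.
Import Order.TTheory GRing.Theory Num.Theory.
Local Open Scope classical_set_scope.
Local Open Scope ring_scope.

Section Kraft.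
Variables (R : realType) (D : nat) (hD : (0 < D)%N).

Definition pfree (s : seq (seq 'I_D)) :=
  {in s &, forall p q, prefix p q -> p = q}.

Lemma kraft_nil (s : seq (seq 'I_D)) : uniq s -> pfree s -> [::] \in s ->
  \sum_(p <- s) ((D%:R : R) ^- size p) <= 1.
Proof.
move=> us pf ns.
have all0 : forall q, q \in s -> q = [::].
  by move=> q qs; apply/esym/pf => //; exact: prefix0s.
case: s us pf ns all0 => [//|p s] /= /andP[ps us] _ _ all0.
have p0 : p = [::] by apply: all0; rewrite inE eqxx.
case: s ps us all0 => [|q s] ps us all0.
  by rewrite big_cons big_nil p0 expr0 invr1 addr0.
have q0 : q = [::] by apply: all0; rewrite !inE eqxx orbT.
by move: ps; rewrite p0 q0 inE eqxx.
Qed.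

Definition ha (a : 'I_D) (p : seq 'I_D) := if p is b :: _ then b == a else false.

Lemma kraft L : forall s : seq (seq 'I_D), uniq s -> pfree s ->
  all (fun p => size p <= L)%N s ->
  \sum_(p <- s) ((D%:R : R) ^- size p) <= 1.
Proof.
elim: L => [|L IH] s us pf sz.
  case: s us pf sz => [|p s] us pf sz; first by rewrite big_nil.
  apply: kraft_nil => //; move: sz => /= /andP[]; rewrite leqn0 size_eq0.
  by move=> /eqP-> _; rewrite inE eqxx.
have [ns|ns] := boolP ([::] \in s); first exact: kraft_nil.
have -> : \sum_(p <- s) ((D%:R : R) ^- size p) =
    \sum_(a : 'I_D) ((D%:R : R)^-1 *
       \sum_(t <- [seq behead p | p <- s & ha a p]) (D%:R : R) ^- size t).
  transitivity (\sum_(p <- s) \sum_(a : 'I_D)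
       (if ha a p then (D%:R : R) ^- size p else 0)).
    rewrite big_seq [in RHS]big_seq; apply: eq_bigr => p ps; rewrite -big_mkcond /=.
    case: p ps => [|b p] ps; first by rewrite ps in ns.
    by rewrite (big_pred1 b) //= => a; rewrite /ha eq_sym.
  rewrite exchange_big /=; apply: eq_bigr => a _.
  rewrite big_map big_filter big_distrr /= [RHS]big_mkcond.
  rewrite big_seq [in RHS]big_seq; apply: eq_bigr => p ps; case: ifP => // _.
  case: p ps => [|b p] ps; first by rewrite ps in ns.
  by rewrite /= exprS invfM mulrC.
have H1 : forall a : 'I_D, \sum_(t <- [seq behead p | p <- s & ha a p])
    (D%:R : R) ^- size t <= 1.
  move=> a; apply: IH.
  - rewrite map_inj_in_uniq ?filter_uniq // => p q.
    rewrite !mem_filter => /andP[hp _] /andP[hq _].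
    by case: p q hp hq => [|b p] [|c q] //= /eqP-> /eqP-> ->.
  - move=> t u /mapP[p + ->] /mapP[q + ->]; rewrite !mem_filter.
    move=> /andP[hp ps] /andP[hq qs] pq.
    have := pf p q ps qs.
    case: p q hp hq ps qs pq => [|b p] [|c q] //= /eqP-> /eqP-> _ _ pq.
    by rewrite eqxx pq => /(_ isT) [->].
  - apply/allP => t /mapP[p + ->]; rewrite mem_filter => /andP[_ ps].
    by move/allP: sz => /(_ p ps); rewrite size_behead; case: (size p).
apply: (le_trans (y := \sum_(a : 'I_D) (D%:R : R)^-1)).
  apply: ler_sum => a _; rewrite -[leRHS]mulr1 ler_wpM2l //.
rewrite sumr_const card_ord -[_ *+ D]mulr_natr mulVf //.
by rewrite pnatr_eq0 -lt0n.
Qed.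

End Kraft.

Section Main.
Variables (R : realType) (X : countType) (x0 : X) (D : nat) (hD : (1 < D)%N).
Variables (U : machine X D) (hpf : prefix_free U).
Variables (dT : measure_display) (Theta : measurableType dT)
    (k : R.-pker Theta ~> Xinf x0) (pi : probability Theta R).

Local Notation P := (mixture k pi).

Lemma size_pre n (w : nat -> X) : size (pre n w) = n.
Proof. by rewrite /pre size_map size_iota. Qed.

Lemma mcyl (x : seq X) : measurable (@cyl X x0 x : set (Xinf x0)).
Proof. by apply: sub_sigma_algebra; exists x. Qed.

Lemma measurable_pre (Q : seq X -> Prop) n :
  measurable ([set w : Xinf x0 | Q (pre n w)]).
Proof.
pose C i : set (Xinf x0) := if pickle_inv i is Some x then
  (if pselect (Q x /\ size x = n) then @cyl X x0 x else set0) else set0.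
have -> : [set w : Xinf x0 | Q (pre n w)] = \bigcup_i C i.
  apply/seteqP; split => w /=.
    move=> Qw; exists (pickle (pre n w)) => //.
    rewrite /C pickleK_inv; destruct (pselect (Q (pre n w) /\ size (pre n w) = n)) as [hh|nQ]; last by exfalso; apply: nQ; rewrite size_pre.
    by rewrite /cyl /= size_pre.
  move=> [i _]; rewrite /C; case: (pickle_inv i) => [x|//].
  case: (pselect _) => [[Qx sx] cw|//].
  have e : pre n w = x by rewrite -sx; exact: cw.
  by rewrite e.
apply: bigcup_measurable => i _; rewrite /C.
case: (pickle_inv i) => [x|//]; destruct (pselect (Q x /\ size x = n)) as [hh|hh]; [exact: mcyl|exact: measurable0].
Qed.

Lemma P_ge0 x : (0 <= P x)%E.
Proof. by apply: integral_ge0 => th _. Qed.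

Lemma P_le1 x : (P x <= 1)%E.
Proof.
rewrite /mixture; apply: (@le_trans _ _ (\int[pi]_(th in setT) (1%R)%:E)%E).
  apply: ge0_le_integral => //.
  - exact: (measurable_kernel k _ (mcyl x)).
  - move=> th _; rewrite (le_trans (le_measure _ _ _ (subsetT _))) ?inE //.
      exact: mcyl.
    exact: sprob_kernel_le1.
rewrite integral_cst // mul1e. exact: probability_le1.
Qed.

Definition bad x := ~ barron_ok U P x.

Lemma P_fin x : P x = (fine (P x))%:E.
Proof.
by rewrite fineK // ge0_fin_numE ?P_ge0 // (le_lt_trans (P_le1 x)) ?ltry.
Qed.

Lemma bad_bound x : bad x -> (0 < P x)%E ->
  exists p, U p = Some x /\ (P x <= ((D%:R : R) ^- size p)%:E)%E.
Proof.
move=> bx Px0.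
set c := ln (fine (P x)) / ln D%:R.
have nk : ~ (0 < KU U x + c%:E)%E by move=> h; apply: bx.
have [prog|noprog] := pselect (exists p, U p = Some x); last first.
  exfalso; apply: nk.
  suff -> : @KU _ _ R U x = +oo%E by rewrite /= ltry.
  apply/eqP; rewrite eq_le leey /=; apply: le_ereal_inf_tmp => y [p /= Up _].
  by exfalso; apply: noprog; exists p.
pose Qn n := `[< exists p, size p = n /\ U p = Some x >].
have ex : exists n, Qn n.
  by case: prog => p Up; exists (size p); apply/asboolP; exists p.
case: (ex_minnP ex) => n /asboolP [p [sp Up]] minn.
have KUn : @KU _ _ R U x = (n%:R)%:E.
  apply/eqP; rewrite eq_le; apply/andP; split.
    by apply: ereal_inf_lbound; exists p => //; rewrite sp.
  apply: le_ereal_inf_tmp => y [q /= Uq <-]; rewrite lee_fin ler_nat.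
  by apply: minn; apply/asboolP; exists q.
exists p; split => //; rewrite sp.
have hnc : n%:R + c <= 0.
  rewrite leNgt; apply/negP => h; apply: nk; by rewrite KUn -EFinD lte_fin.
set r := fine (P x).
have r0 : 0 < r by rewrite -lte_fin -P_fin.
have lD : 0 < ln (D%:R : R) by apply: ln_gt0; rewrite ltr1n.
have hl : ln r <= - (n%:R * ln D%:R).
  have : c <= - n%:R by lra.
  by rewrite /c ler_pdivrMr // mulNr.
rewrite P_fin lee_fin -/r.
rewrite -(lnK (x := r)) ?posrE //.
apply: (le_trans (y := expR (- (n%:R * ln D%:R)))); first by rewrite ler_expR.
by rewrite expRN expRM_natl lnK // posrE ltr0n ltnW.
Qed.

Definition E (i : nat) : set (Xinf x0) :=
  if pickle_inv i is Some x then (if `[< bad x >] then @cyl X x0 x else set0)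
  else set0.

Lemma mE i : measurable (E i).
Proof. by rewrite /E; case: (pickle_inv i) => [x|//]; case: ifP => _ //; exact: mcyl. Qed.

Definition a i := (\int[pi]_th k th (E i))%E.

Lemma a_eq i : a i = if pickle_inv i is Some x then
  (if `[< bad x >] then P x else 0%E) else 0%E.
Proof.
rewrite /a /E; case: (pickle_inv i) => [x|].
  case: ifP => _ //.
  by under eq_integral do rewrite measure0; rewrite integral0.
by under eq_integral do rewrite measure0; rewrite integral0.
Qed.

Lemma a_ge0 i : (0 <= a i)%E.
Proof. by apply: integral_ge0 => th _. Qed.

Definition cond i := `[< exists x, pickle_inv i = Some x /\ bad x /\ (0 < P x)%E >].

Lemma sum_a_le1 : (\sum_(i <oo) a i <= 1)%E.
Proof.
have [q hq] : {q : nat -> seq 'I_D & forall i, cond i ->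
    exists x, pickle_inv i = Some x /\ U (q i) = Some x /\
      (P x <= ((D%:R : R) ^- size (q i))%:E)%E}.
  apply: (@choice nat (seq 'I_D) (fun i p => cond i ->
    exists x, pickle_inv i = Some x /\ U p = Some x /\
      (P x <= ((D%:R : R) ^- size p)%:E)%E)) => i.
  have [/asboolP [x [px [bx Px]]]|nc] := boolP (cond i); last first.
    by exists [::] => /negP.
  have [p [Up Pp]] := bad_bound bx Px.
  by exists p => _; exists x.
apply: lime_le; first by apply: is_cvg_nneseries => n _ _; exact: a_ge0.
apply: nearW => n.
pose J := [seq i <- index_iota 0 n | cond i].
apply: (le_trans (y := \sum_(0 <= i < n)
   (if cond i then ((D%:R : R) ^- size (q i))%:E else 0%E))).
  apply: lee_sum => i _; rewrite a_eq.
  have rhs0 : (0 <= if cond i then ((D%:R : R) ^- size (q i))%:E else 0%E)%E.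
    by case: ifP => // _; rewrite lee_fin invr_ge0 exprn_ge0 // ler0n.
  case e : (pickle_inv i) => [x|] //.
  case: ifP => // /asboolP bx.
  have [Px|Px] := ltP 0%E (P x).
    have ci : cond i by apply/asboolP; exists x.
    rewrite ci; have [y [ey [Uy Py]]] := hq i ci.
    by move: ey; rewrite e => -[->].
  exact: le_trans Px rhs0.
rewrite -big_mkcond /= -big_filter -/J sumEFin lee_fin.
rewrite -(big_map q xpredT (fun p => (D%:R : R) ^- size p)).
have hJ : forall i, i \in J -> exists x, pickle_inv i = Some x /\ U (q i) = Some x.
  move=> i; rewrite mem_filter => /andP[ci _].
  by have [x [? [? _]]] := hq i ci; exists x.
apply: (@kraft R D (ltnW hD) (\max_(p <- map q J) size p)).
- rewrite map_inj_in_uniq ?filter_uniq ?iota_uniq // => i j iJ jJ qij.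
  have [x [ex Ux]] := hJ i iJ; have [y [ey Uy]] := hJ j jJ.
  move: Uy; rewrite -qij Ux => -[xy].
  by rewrite -(@pickle_invK (seq X) i) -(@pickle_invK (seq X) j) ex ey /= xy.
- move=> p p' /mapP[i iJ ->] /mapP[j jJ ->] pp.
  have [x [_ Ux]] := hJ i iJ; have [y [_ Uy]] := hJ j jJ.
  by apply: hpf => //; rewrite ?Ux ?Uy.
- by apply/allP => p pJ /=; apply: leq_bigmax_seq.
Qed.

Local Notation B := (@barron_set R X x0 D U P).

Lemma mB : measurable B.
Proof.
have -> : B = \bigcup_N \bigcap_(n in [set n | (N <= n)%N])
    [set w : Xinf x0 | barron_ok U P (pre n w)].
  apply/seteqP; split => w /=.
    by move=> [N HN]; exists N => // n /= Nn; exact: HN.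
  by move=> [N _ HN]; exists N => n Nn; exact: HN.
apply: bigcup_measurable => N _; apply: bigcap_measurableType => n _.
exact: measurable_pre.
Qed.

Lemma notB_limsup : ~` B `<=` lim_sup_set E.
Proof.
move=> w nB M _.
pose S := (\max_(i < M) (if pickle_inv i is Some y then size (y : seq X) else 0))%N.
have [n [Sn bn]] : exists n, (S < n)%N /\ bad (pre n w).
  apply: contrapT => hn; apply: nB; exists S.+1 => n Sn.
  apply: contrapT => bn; apply: hn; by exists n.
exists (pickle (pre n w)).
  rewrite /=; rewrite leqNgt; apply/negP => jM.
  have := @leq_bigmax _ (fun i : 'I_M => if pickle_inv i is Some y then size (y : seq X) else 0)%N (Ordinal jM).
  rewrite /= pickleK_inv size_pre -/S => nS.
  by move: (leq_trans Sn nS); rewrite ltnn.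
rewrite /E pickleK_inv; case: ifP => [_|/asboolP //].
by rewrite /cyl /= size_pre.
Qed.

Definition phi (th : Theta) : \bar R := (\sum_(i <oo) k th (E i))%E.

Lemma mphi : measurable_fun setT phi.
Proof.
apply: (@ge0_emeasurable_sum _ _ _ setT (fun i th => k th (E i)) xpredT).
- by move=> i th _ _; exact: measure_ge0.
- by move=> i _; exact: measurable_kernel (mE i).
Qed.

Lemma int_phi : (\int[pi]_th phi th = \sum_(i <oo) a i)%E.
Proof.
rewrite /phi integral_nneseries //.
by move=> i; exact: measurable_kernel (mE i).
Qed.


Lemma final : {ae pi, forall th, k th B = 1%E}.
Proof.
have phi0 th : (0 <= phi th)%E.
  by apply: nneseries_ge0 => i _ _; exact: measure_ge0.
have hint : pi.-integrable setT phi.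
  apply/integrableP; split; first exact: mphi.
  have -> : (\int[pi]_x `|phi x|)%E = (\int[pi]_x phi x)%E.
    by apply: eq_integral => th _; rewrite gee0_abs.
  by rewrite int_phi; exact: le_lt_trans sum_a_le1 (ltry _).
have := integrable_ae measurableT hint.
apply: filterS => th /(_ I) phifin.
have mL : measurable (lim_sup_set E).
  apply: bigcap_measurableType => n _; apply: bigcup_measurable => j _.
  exact: mE.
have h0 : k th (lim_sup_set E) = 0%E.
  apply: lim_sup_set_cvg0; first exact: mE.
  by move/fin_numPlt: phifin => /andP[_].
have hc : k th (~` B) = 0%E.
  apply/eqP; rewrite eq_le measure_ge0 andbT -h0; apply: le_measure.
  - by rewrite inE; exact: measurableC mB.
  - by rewrite inE.
  - exact: notB_limsup.
have := measureU (k th) mB (measurableC mB) (setICr B).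
rewrite setUv => e; rewrite -[LHS]adde0 -[X in (_ + X)%E]hc.
apply: (etrans (esym e)). exact: prob_kernel.
Qed.

End Main.

Unset Implicit Arguments. Set Strict Implicit.

Theorem corollary2 (R : realType) (X : countType) (x0 : X) (D : nat)
    (hD : (1 < D)%N) (U : machine X D) (hU : universal_prefix_machine U)
    (dT : measure_display) (Theta : measurableType dT)
    (k : R.-pker Theta ~> Xinf x0) (pi : probability Theta R) :
  {ae pi, forall th : Theta,
     k th (@barron_set R X x0 D U (mixture k pi)) = 1%E}.
Proof.
exact: (final hD hU.1.2).
Qed.
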